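(* Let $A\in\mathrm{SL}(n,\mathbb{C})$ be such that its characteristic polynomial $\chi_A(x)=x^n-c_{n-1}x^{n-1}+c_{n-2}x^{n-2}-\cdots+(-1)^n$ is $c$-reciprocal. Let $R(\chi_A,\chi_A')$ denote the resultant of $\chi_A$ and its derivative $\chi_A'$. Then: (i) $A$ is regular $2m$-loxodromic for some integer $m\ge 0$ if and only if $R(\chi_A,\chi_A')>0$; (ii) $A$ is regular $(2m+1)$-loxodromic for some integer $m\ge 0$ if and only if $R(\chi_A,\chi_A')<0$; (iii) $A$ is not regular (i.e. has a repeated eigenvalue) if and only if $R(\chi_A,\chi_A')=0$.
   Context: A polynomial $f$ with nonzero roots is $c$-reciprocal if for every root $\lambda$, $\overline{\lambda}^{-1}$ is also a root with the same multiplicity. A matrix in $\mathrm{SL}(n,\mathbb{C})$ is regular if its characteristic polynomial has no repeated roots. A matrix $g\in\mathrm{SL}(n,\mathbb{C})$ is $k$-loxodromic ($k\ge 0$) if it has $k$ pairs of eigenvalues $r_je^{i\theta_j}, r_j^{-1}e^{i\theta_j}$ with $r_j>0$, $r_j\neq 1$, $j=1,\dots,k$, and all other eigenvalues have modulus one ($0$-loxodromic means all eigenvalues have modulus one). ''Regular $k$-loxodromic'' means regular and $k$-loxodromic. *)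

(* Defs.v *)
From HB Require Import structures.
From mathcomp Require Import all_boot all_order all_algebra.
From mathcomp Require Import reals complex.
Set Implicit Arguments. Unset Strict Implicit. Unset Printing Implicit Defensive.
Import Order.TTheory GRing.Theory Num.Theory.
Local Open Scope ring_scope.

Definition in_SL (C : numClosedFieldType) (n : nat) (A : 'M[C]_n) : Prop :=
  \det A = 1.

Definition c_reciprocal (C : numClosedFieldType) (f : {poly C}) : Prop :=
  f != 0 /\
  forall lambda : C, root f lambda ->
    lambda != 0 /\ root f ((lambda^*)^-1) /\ mup ((lambda^*)^-1) f = mup lambda f.

Definition regular (C : numClosedFieldType) (n : nat) (A : 'M[C]_n) : Prop :=
  forall lambda : C, (mup lambda (char_poly A) <= 1)%N.

(* k-loxodromic: the eigenvalues (counted with multiplicity, i.e. the roots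
   of the characteristic polynomial) consist of k pairs
   r_j e^{i theta_j}, r_j^-1 e^{i theta_j}  (r_j > 0, r_j <> 1), where
   w_j = e^{i theta_j} is any complex number of modulus one, together with
   a list s of eigenvalues all of modulus one. *)
Definition k_loxodromic (C : numClosedFieldType) (n : nat) (A : 'M[C]_n)
    (k : nat) : Prop :=
  exists (r w : 'I_k -> C) (s : seq C),
    (forall j, 0 < r j /\ r j != 1 /\ `|w j| = 1) /\
    (forall u, u \in s -> `|u| = 1) /\
    char_poly A =
      (\prod_(j < k) (('X - (r j * w j)%:P) * ('X - ((r j)^-1 * w j)%:P)))
      * \prod_(u <- s) ('X - u%:P).

Definition regular_k_loxodromic (C : numClosedFieldType) (n : nat)
    (A : 'M[C]_n) (k : nat) : Prop :=
  regular A /\ k_loxodromic A k.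

(* Main.v *)
Require Import Defs.
From HB Require Import structures.
From mathcomp Require Import all_boot all_order all_algebra.
From mathcomp Require Import reals complex.
From mathcomp Require Import ring.
Import Order.TTheory GRing.Theory Num.Theory.
Local Open Scope ring_scope.

Module Aux.
Set Implicit Arguments. Unset Strict Implicit. Unset Printing Implicit Defensive.

Lemma split_lsh m n (i : 'I_m) : split (lshift n i) = inl i.
Proof. exact: (unsplitK (inl _ i)). Qed.
Lemma split_rsh m n (i : 'I_n) : split (rshift m i) = inr i.
Proof. exact: (unsplitK (inr _ i)). Qed.

Section Res.
Variable F : fieldType.

Lemma res_roots (L : seq F) (q : {poly F}) :
  uniq L -> (forall x, x \in L -> x != 0) ->
  resultant (\prod_(z <- L) ('X - z%:P)) q =
    (-1) ^+ (size L * (size q).-1) * \prod_(z <- L) q.[z].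
Proof.
move=> uL nzL.
set p := \prod_(z <- L) _.
have sp : (size p).-1 = size L by rewrite size_prod_XsubC.
have szp : size p = (size p).-1.+1 by rewrite size_prod_XsubC.
have proot : forall z, z \in L -> p.[z] = 0.
  move=> z zL; rewrite /p horner_prod (big_rem z) //= !hornerE subrr mul0r //.
rewrite /resultant.
move: (@Sylvester_mxE _ p q); move: (Sylvester_mx p q).
set dq := (size q).-1; set dp := (size p).-1.
move=> S SE.
pose lam (j : 'I_dp) := nth 0 L j.
have conv : forall G : F -> F, \prod_(z <- L) G z = \prod_(j < dp) G (lam j).
  by move=> G; rewrite (big_nth 0) big_mkord -sp.
have lamL : forall j, lam j \in L by move=> j; rewrite /lam mem_nth // -sp.
have hrow : forall (r : {poly F}) i x, (size r + i <= dq + dp)%N ->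
   \sum_(k < dq + dp) (r`_(k - i) *+ (i <= k)) * x ^+ k = (r * 'X^i).[x].
  move=> r i x hs; rewrite (@horner_coef_wide _ (dq + dp)); last first.
    apply: leq_trans (size_polyMleq _ _) _; rewrite size_polyXn addnS /=; exact: hs.
  apply: eq_bigr => k _; rewrite coefMXn; case: ltnP => hk /=.
    by rewrite mulr0n.
  by rewrite mulr1n.
pose a : 'rV_dp := \row_j lam j.
pose V := Vandermonde dp a.
pose Lam : 'M_(dq + dp, dp) := \matrix_(k, j) lam j ^+ k.
pose M := row_mx (col_mx (1%:M : 'M_dq) (0 : 'M_(dp, dq))) Lam.
have detM : \det M = \det V * \prod_j lam j ^+ dq.
  have -> : M = block_mx 1%:M (usubmx Lam) 0 (dsubmx Lam) by rewrite block_mxEh !vsubmxK.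
  rewrite det_ublock det1 mul1r.
  have -> : dsubmx Lam = V *m diag_mx (\row_j lam j ^+ dq).
    rewrite mul_mx_diag; apply/matrixP => k j; rewrite !mxE exprD mulrC //.
  by rewrite det_mulmx det_diag; under eq_bigr do rewrite mxE.
have Hp0 : usubmx S *m Lam = 0.
  apply/matrixP => i j; rewrite !mxE.
  under eq_bigr do rewrite !mxE SE split_lsh.
  rewrite hrow ?hornerM ?proot ?mul0r //.
  by rewrite szp addSn -addnS addnC leq_add2r.
have SM : S *m M = block_mx (usubmx (lsubmx S)) 0 (dsubmx (lsubmx S)) (dsubmx S *m Lam).
  rewrite /M mul_mx_row.
  have -> : S *m col_mx 1%:M 0 = lsubmx S by rewrite -{1}[S]hsubmxK mul_row_col mulmx1 mulmx0 addr0.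
  have -> : S *m Lam = col_mx 0 (dsubmx S *m Lam) by rewrite -{1}[S]vsubmxK mul_col_mx Hp0.
  by rewrite block_mxEh vsubmxK.
have dA1 : \det (usubmx (lsubmx S)) = p`_0 ^+ dq.
  rewrite -det_tr det_trig; last first.
    apply/is_trig_mxP => i j hij; rewrite !mxE SE split_lsh /=.
    by rewrite leqNgt hij mulr0n.
  rewrite (eq_bigr (fun _ => p`_0)); last by move=> i _; rewrite !mxE SE split_lsh /= subnn leqnn mulr1n.
  by rewrite prodr_const card_ord.
have dA4 : \det (dsubmx S *m Lam) = \det V * \prod_j q.[lam j].
  have -> : dsubmx S *m Lam = V *m diag_mx (\row_j q.[lam j]).
    rewrite mul_mx_diag; apply/matrixP => i j; rewrite !mxE.
    under eq_bigr do rewrite !mxE SE split_rsh.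
    rewrite hrow; first by rewrite hornerM hornerXn mulrC.
    apply: (@leq_trans (dq.+1 + i)); first by rewrite leq_add2r /dq leqSpred.
    by rewrite addSn -addnS leq_add2l.
  by rewrite det_mulmx det_diag; under eq_bigr do rewrite mxE.
have key := det_mulmx S M.
rewrite SM det_lblock dA1 dA4 detM in key.
have p0 : p`_0 = (-1) ^+ dp * \prod_j lam j.
  rewrite -horner_coef0 /p horner_prod conv.
  rewrite (eq_bigr (fun j => - lam j)); last by move=> j _; rewrite hornerXsubC sub0r.
  by rewrite prodrN card_ord.
have nzV : \det V != 0.
  rewrite det_Vandermonde; rewrite prodf_seq_neq0; apply/allP => i _; apply/implyP => _.
  rewrite prodf_seq_neq0; apply/allP => j _; apply/implyP => hij.
  rewrite !mxE subr_eq0 /lam nth_uniq // -?sp //.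
  by rewrite neq_ltn hij orbT.
have nzP : \prod_j lam j ^+ dq != 0.
  rewrite prodf_seq_neq0; apply/allP => j _; apply/implyP => _; rewrite expf_neq0 //; exact: nzL.
rewrite conv -sp.
apply: (mulIf (mulf_neq0 nzV nzP)).
rewrite -key p0 exprMn -exprM prodrXl.
set s := (-1) ^+ _; set P := \prod_j lam j; set Q := \prod_j q.[lam j].
ring.
Qed.
End Res.


Section D.
Variable F : fieldType.
Definition pX (L : seq F) := \prod_(z <- L) ('X - z%:P).
Definition Dl (L : seq F) := \prod_(x <- L) (pX L)^`().[x].

Lemma pX_root L y : y \in L -> (pX L).[y] = 0.
Proof. by move=> yL; apply/rootP; rewrite root_prod_XsubC. Qed.

Lemma Dl_cons x L : Dl (x :: L) = Dl L * \prod_(y <- L) ((x - y) * (y - x)).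
Proof.
rewrite /Dl /pX [\prod_(z <- x :: L) ('X - z%:P)]big_cons; set q := \prod_(z <- L) ('X - z%:P).
have dq : (('X - x%:P) * q)^`() = q + ('X - x%:P) * q^`().
  by rewrite derivM derivXsubC mul1r.
rewrite dq big_cons hornerD hornerM hornerXsubC subrr mul0r addr0.
rewrite (eq_big_seq (fun y => (y - x) * q^`().[y])); last first.
  by move=> y yL; rewrite hornerD hornerM hornerXsubC (pX_root yL) add0r.
rewrite big_split /= /q horner_prod.
rewrite (eq_bigr (fun y => x - y)); last by move=> y _; rewrite hornerXsubC.
rewrite [\prod_(y <- L) ((x - y) * _)]big_split /=; ring.
Qed.

Lemma prod_const_seq (L : seq F) (x : F) : \prod_(y <- L) x = x ^+ size L.
Proof. by elim: L => [|y L IH]; rewrite ?big_nil ?big_cons ?IH ?exprS. Qed.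

Definition hh (x y : F) := 2 - x / y - y / x.
Fixpoint Hl (L : seq F) := if L is x :: L' then Hl L' * \prod_(y <- L') hh x y else 1.

Lemma Dl_Hl L : (forall z, z \in L -> z != 0) ->
  Dl L * \prod_(z <- L) z = (\prod_(z <- L) z) ^+ size L * Hl L.
Proof.
elim: L => [|x L IH] nz /=; first by rewrite /Dl !big_nil !mulr1.
have nzL : forall z, z \in L -> z != 0 by move=> z zL; apply: nz; rewrite inE zL orbT.
have nzx : x != 0 by apply: nz; rewrite inE eqxx.
rewrite Dl_cons big_cons.
have e : \prod_(y <- L) ((x - y) * (y - x)) =
    x ^+ size L * \prod_(y <- L) y * \prod_(y <- L) hh x y.
  rewrite (eq_big_seq (fun y => x * y * hh x y)); last first.
    move=> y yL; have nzy := nzL y yL; rewrite /hh; field.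
    by rewrite nzy nzx.
  by rewrite !big_split /= prod_const_seq.
rewrite e; set P := \prod_(y <- L) y; set Hh := \prod_(y <- L) hh x y.
transitivity ((Dl L * P) * (x ^+ size L * Hh * x * P)); first by ring.
rewrite IH // exprS exprMn; ring.
Qed.

Lemma Dl_neq0 L : uniq L -> Dl L != 0.
Proof.
elim: L => [|x L IH] /=; first by rewrite /Dl big_nil oner_neq0.
case/andP => xL uL; rewrite Dl_cons mulf_neq0 ?IH //.
rewrite prodf_seq_neq0; apply/allP => y yL /=.
rewrite mulf_neq0 // subr_eq0; apply: contraNneq xL => e.
  by rewrite e.
by rewrite -e.
Qed.

Lemma nonuniq_root L : ~~ uniq L -> exists y, root (pX L) y && root (pX L)^`() y.
Proof.
elim: L => [|x L IH] //=; rewrite negb_and negbK /pX big_cons.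
set q := \prod_(z <- L) ('X - z%:P).
have dq : (('X - x%:P) * q)^`() = q + ('X - x%:P) * q^`().
  by rewrite derivM derivXsubC mul1r.
rewrite dq; case/orP => [xL | /IH [y /andP [r1 r2]]].
  exists x; rewrite rootM root_XsubC eqxx /= rootE hornerD hornerM hornerXsubC subrr mul0r addr0.
  by apply/eqP; exact: pX_root.
exists y; rewrite rootM r1 orbT /= rootE hornerD hornerM.
by rewrite (rootP r1) (rootP r2) mulr0 addr0.
Qed.

End D.


Section Sign.
Variable C : numClosedFieldType.
Definition sgc (z : C) := (z^*)^-1.

Lemma sigK : involutive sgc.
Proof. by move=> z; rewrite /sgc fmorphV /= conjCK invrK. Qed.

Lemma hh_sig (x y : C) : hh (sgc x) (sgc y) = (hh x y)^*.
Proof.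
rewrite /hh /sgc !rmorphB !rmorphM !fmorphV /= rmorph_nat !invrK; ring.
Qed.

Lemma unit_conj (u : C) : `|u| = 1 -> u^* = u^-1.
Proof. by move=> hu; rewrite invC_norm hu expr1n invr1 mul1r. Qed.

Lemma sig_unit (u : C) : `|u| = 1 -> sgc u = u.
Proof. by move=> hu; rewrite /sgc unit_conj // invrK. Qed.

Lemma unit_nz (u : C) : `|u| = 1 -> u != 0.
Proof. by move=> hu; rewrite -normr_eq0 hu oner_neq0. Qed.

Lemma unit_ge0 (u y : C) : `|u| = 1 -> `|y| = 1 -> 0 <= hh u y.
Proof.
move=> hu hy.
have -> : hh u y = (u - y) * (u - y)^*.
  rewrite rmorphB /= !unit_conj // /hh; field.
  by rewrite !unit_nz.
exact: mul_conjC_ge0.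
Qed.

Lemma pair_neg (z : C) : z != 0 -> 0 <= - hh z (sgc z).
Proof.
move=> nz.
have nn : `|z| != 0 by rewrite normr_eq0.
set v := (`|z| ^+ 2 - 1) / `|z|.
have vc : v^* = v.
  by rewrite /v rmorphM rmorphB fmorphV rmorphXn /= rmorph1 geC0_conj.
have -> : - hh z (sgc z) = v * v^*.
  rewrite vc /v /hh /sgc normCK.
  have nc : z^* != 0 by rewrite conjC_eq0.
  have : `|z| ^+ 2 = z * z^* by rewrite normCK.
  move: nn; set a := `|z|; move=> nn e.
  rewrite invrK.
  have -> : (z * z^* - 1) / a * ((z * z^* - 1) / a) = (z * z^* - 1)^+2 / a^+2.
    by field.
  rewrite e; field.
  by rewrite nz nc.
exact: mul_conjC_ge0.
Qed.

Fixpoint pf (Z : seq C) := if Z is z :: Z' then z :: sgc z :: pf Z' else [::].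

Lemma cross_ge0 (x : C) Z U : (forall u, u \in U -> `|u| = 1) ->
  0 <= \prod_(y <- pf Z ++ U) (hh x y * hh (sgc x) y).
Proof.
move=> hU; elim: Z => [|z Z IH] /=.
  elim: U hU => [|u U IHU] hU; first by rewrite big_nil.
  have hu : `|u| = 1 by apply: hU; rewrite inE eqxx.
  rewrite big_cons mulr_ge0 ?IHU //; last by move=> v vU; apply: hU; rewrite inE vU orbT.
  rewrite -{2}(sig_unit hu) hh_sig; exact: mul_conjC_ge0.
rewrite !big_cons mulrA mulr_ge0 //.
have -> : hh x z * hh (sgc x) z * (hh x (sgc z) * hh (sgc x) (sgc z)) =
   (hh x z * (hh x z)^*) * (hh x (sgc z) * (hh x (sgc z))^*).
  rewrite -!hh_sig sigK; ring.
by rewrite mulr_ge0 // mul_conjC_ge0.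
Qed.

Lemma unit_cross (u : C) Z U : `|u| = 1 -> (forall v, v \in U -> `|v| = 1) ->
  0 <= \prod_(y <- pf Z ++ U) hh u y.
Proof.
move=> hu hU; elim: Z => [|z Z IH] /=.
  elim: U hU => [|v U IHU] hU; first by rewrite big_nil.
  have hv : `|v| = 1 by apply: hU; rewrite inE eqxx.
  rewrite big_cons mulr_ge0 ?IHU ?unit_ge0 //.
  by move=> w wU; apply: hU; rewrite inE wU orbT.
rewrite !big_cons mulrA mulr_ge0 //.
rewrite -{2}(sig_unit hu) hh_sig; exact: mul_conjC_ge0.
Qed.

Lemma Hl_sign Z U : (forall z, z \in Z -> z != 0) -> (forall v, v \in U -> `|v| = 1) ->
  0 <= (-1) ^+ size Z * Hl (pf Z ++ U).
Proof.
move=> hZ hU; elim: Z hZ => [|z Z IH] hZ /=.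
  rewrite expr0 mul1r.
  elim: U hU => [|v U IHU] hU /=; first by [].
  have hv : `|v| = 1 by apply: hU; rewrite inE eqxx.
  rewrite mulr_ge0 ?IHU //; first by move=> w wU; apply: hU; rewrite inE wU orbT.
  by apply: (unit_cross [::] hv) => w wU; apply: hU; rewrite inE wU orbT.
have nz : z != 0 by apply: hZ; rewrite inE eqxx.
rewrite big_cons.
set L := pf Z ++ U.
have -> : (-1) ^+ (size Z).+1 * (Hl L * \prod_(y <- L) hh (sgc z) y * (hh z (sgc z) * \prod_(y <- L) hh z y))
   = ((-1) ^+ size Z * Hl L) * (- hh z (sgc z)) * \prod_(y <- L) (hh z y * hh (sgc z) y).
  rewrite big_split /= exprS; ring.
apply: mulr_ge0; last exact: cross_ge0.
apply: mulr_ge0; last exact: pair_neg.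
by apply: IH => w wZ; apply: hZ; rewrite inE wZ orbT.
Qed.
End Sign.


Section Main.
Variable C : numClosedFieldType.

Lemma prodN_seq (L : seq C) : \prod_(z <- L) (- z) = (-1) ^+ size L * \prod_(z <- L) z.
Proof.
elim: L => [|x L IH]; first by rewrite !big_nil expr0 mulr1.
by rewrite !big_cons IH exprS /=; ring.
Qed.

Lemma pX_coef0 (L : seq C) : (pX L)`_0 = (-1) ^+ size L * \prod_(z <- L) z.
Proof.
rewrite -horner_coef0 /pX horner_prod -prodN_seq.
by apply: eq_bigr => z _; rewrite hornerXsubC sub0r.
Qed.

Lemma res_Dl (L : seq C) : uniq L -> (forall z, z \in L -> z != 0) ->
  odd (size L * (size (pX L)^`()).-1) = false ->
  resultant (pX L) (pX L)^`() = Dl L.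
Proof.
move=> uL nzL hodd; rewrite {1}/pX res_roots //.
by rewrite -signr_odd hodd expr0 mul1r.
Qed.

Lemma deriv_size (p : {poly C}) n : p \is monic -> size p = n.+1 -> (0 < n)%N ->
  size p^`() = n.
Proof.
move=> mp sp n0; apply/eqP; rewrite eqn_leq.
have p0 : p != 0 by rewrite -size_poly_gt0 sp.
have := lt_size_deriv p0; rewrite sp ltnS => -> /=.
rewrite leqNgt; apply/negP => h.
have : p^`()`_n.-1 = 0 by apply: nth_default; rewrite -ltnS prednK.
rewrite coef_deriv prednK //.
have -> : p`_n = 1 by move/monicP: mp; rewrite /lead_coef sp.
by move/eqP; rewrite pnatr_eq0; move/eqP => e; rewrite e in n0.
Qed.

Lemma reg_uniq (L : seq C) : (forall x, mup x (pX L) <= 1)%N <-> uniq L.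
Proof.
split => [h | uL x]; last by rewrite mu_prod_XsubC count_uniq_mem // leq_b1.
apply: count_mem_uniq => x; have := h x; rewrite mu_prod_XsubC.
have : (0 < count_mem x L)%N = (x \in L) by rewrite -has_count has_pred1.
case: (x \in L) => /=.
  by case: (count_mem x L) => // [[]].
by case: (count_mem x L).
Qed.

End Main.


Section Main2.
Variable C : numClosedFieldType.

Lemma pfE (Z : seq C) : pX (pf Z) = \prod_(z <- Z) (('X - z%:P) * ('X - (sgc z)%:P)).
Proof. by elim: Z => [|z Z IH]; rewrite /pX ?big_nil //= !big_cons -/(pX _) IH mulrA. Qed.

Theorem main_gen (n : nat) (A : 'M[C]_n) :
  (0 < n)%N -> in_SL A -> c_reciprocal (char_poly A) ->
  [/\ (exists m : nat, regular_k_loxodromic A (2 * m)%N)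
        <-> 0 < resultant (char_poly A) (char_poly A)^`(),
      (exists m : nat, regular_k_loxodromic A (2 * m).+1)
        <-> resultant (char_poly A) (char_poly A)^`() < 0
    & ~ regular A <-> resultant (char_poly A) (char_poly A)^`() = 0].
Proof.
move=> n0 hdet [chi0 hrec].
have mon : char_poly A \is monic := char_poly_monic A.
have szchi : size (char_poly A) = n.+1 := size_char_poly A.
set chi := char_poly A in mon szchi hrec chi0 *.
have nzroot : forall z, root chi z -> z != 0 by move=> z /hrec [].
have recroot : forall z, root chi z -> root chi (sgc z) by move=> z /hrec [_ []].
have [L0 eL0] : {L | chi = pX L}.
  have [L eL] := closed_field_poly_normal chi.
  by exists L; rewrite eL (monicP mon) scale1r.
have facts : forall L, chi = pX L ->
   [/\ size L = n, (regular A <-> uniq L), (forall z, z \in L -> z != 0)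
     & \prod_(z <- L) z = 1].
  move=> L eL; split.
  - by have := szchi; rewrite eL /pX size_prod_XsubC => -[].
  - by rewrite -reg_uniq /regular -/chi eL.
  - by move=> z zL; apply: nzroot; rewrite eL root_prod_XsubC.
  have := char_poly_det A; rewrite -/chi hdet mulr1 eL pX_coef0.
  have -> : size L = n by have := szchi; rewrite eL /pX size_prod_XsubC => -[].
  by rewrite -{2}[(-1) ^+ n]mulr1 => /(mulfI (negbT (signr_eq0 _ _))).
have par : odd (n * (size chi^`()).-1) = false.
  rewrite (deriv_size mon szchi n0) oddM.
  by case: (n) n0 => // n' _ /=; case: (odd n').
have resDl : forall L, chi = pX L -> uniq L -> resultant chi chi^`() = Dl L.
  move=> L eL uL; have [sL _ nzL _] := facts L eL.
  have hp : odd (size L * (size (pX L)^`()).-1) = false by rewrite -eL sL.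
  by rewrite eL res_Dl.
have resnz : regular A -> resultant chi chi^`() != 0.
  move=> reg; have [_ [r1 _] _ _] := facts L0 eL0.
  by rewrite (resDl L0 eL0 (r1 reg)); exact: Dl_neq0 (r1 reg).
have res0 : ~ regular A -> resultant chi chi^`() = 0.
  move=> nreg; have [_ [_ r2] _ _] := facts L0 eL0.
  have nu : ~~ uniq L0 by apply/negP => /r2.
  have [y /andP [ry ry']] := nonuniq_root nu.
  rewrite -eL0 in ry ry'.
  apply/eqP; rewrite resultant_eq0; apply: (root_size_gt1 (a:=y)).
    by rewrite gcdp_eq0 negb_and chi0.
  by rewrite root_gcd ry ry'.
have signk : forall k, regular_k_loxodromic A k -> 0 < (-1) ^+ k * resultant chi chi^`().
  move=> k [reg [r [w [s [hrw [hs]]]]]]; rewrite -/chi => echi.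
  set Z := [seq r j * w j | j <- enum 'I_k].
  have eL : chi = pX (pf Z ++ s).
    rewrite /pX big_cat /= -/(pX (pf Z)) pfE echi big_map big_enum /=.
    congr (_ * _); apply: eq_big => // j _.
    have [rp [_ wn]] := hrw j.
    have e : sgc (r j * w j) = (r j)^-1 * w j.
      have cr : (r j)^* = r j by rewrite geC0_conj // ltW.
      have cw : (w j)^* = (w j)^-1 by exact: unit_conj.
      by rewrite /sgc rmorphM /= cr cw invfM invrK.
    by rewrite e.
  have [sL [r1 _] nzL pL] := facts _ eL.
  have uL := r1 reg.
  have eDH : Dl (pf Z ++ s) = Hl (pf Z ++ s).
    by have := Dl_Hl nzL; rewrite pL mulr1 expr1n mul1r.
  rewrite (resDl _ eL uL) eDH.
  have nzZ : forall z, z \in Z -> z != 0.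
    move=> z /mapP [j _ ->]; have [rp [_ wn]] := hrw j.
    by rewrite mulf_neq0 // ?(gt_eqF rp) // unit_nz.
  have hsg := Hl_sign nzZ hs.
  have szZ : size Z = k by rewrite size_map size_enum_ord.
  rewrite szZ in hsg; rewrite lt_def hsg andbT mulf_neq0 ?signr_eq0 // -eDH.
  exact: Dl_neq0.
have exk : regular A -> exists k, k_loxodromic A k.
  move=> reg; have [sL [r1 _] nzL pL] := facts L0 eL0.
  have uL := r1 reg.
  have inL : forall z, (z \in L0) = root chi z by move=> z; rewrite eL0 root_prod_XsubC.
  set B := [seq z <- L0 | 1 < `|z|].
  set U := [seq z <- L0 | `|z| == 1].
  have p1 := perm_filterC (fun z => 1 < `|z|) L0.
  set L2 := [seq x <- L0 | predC _ x] in p1.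
  have p2 := perm_filterC (fun z => `|z| == 1) L2.
  set L3 := [seq x <- L2 | predC _ x] in p2.
  have eU : [seq x <- L2 | (fun z => `|z| == 1) x] = U.
    rewrite -filter_predI; apply: eq_filter => z /=.
    by case: eqP => // ->; rewrite ltxx.
  have p3 : perm_eq L3 (map (@sgc C) B).
    apply: uniq_perm; first by rewrite !filter_uniq.
      by rewrite (map_inj_uniq (can_inj (@sigK C))) filter_uniq.
    move=> z.
    have -> : (z \in map (@sgc C) B) = (sgc z \in B).
      by rewrite -{1}(sigK z) mem_map //; exact: can_inj (@sigK C).
    rewrite !mem_filter /=.
    case zL: (z \in L0); last first.
      rewrite !andbF; case sL0: (sgc z \in L0); rewrite ?andbF //.
      by move: sL0; rewrite inL => /recroot; rewrite sigK -inL zL.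
    have nz := nzL z zL.
    have -> : sgc z \in L0 by rewrite inL; apply: recroot; rewrite -inL.
    rewrite /sgc normfV norm_conjC invf_gt1 ?normr_gt0 // andbT andbT.
    rewrite [RHS]lt_neqAle real_leNgt ?normr_real ?real1 //.
  have perm : perm_eq L0 (B ++ (U ++ map (@sgc C) B)).
    by rewrite -p1 perm_cat2l -p2 eU perm_cat2l.
  have chiE : chi = pX B * (pX U * pX (map (@sgc C) B)).
    by rewrite eL0 /pX (perm_big _ perm) !big_cat.
  have inB : forall j : 'I_(size B), B`_j \in L0 /\ 1 < `|B`_j|.
    move=> j; have := mem_nth 0 (ltn_ord j); rewrite mem_filter => /andP [h1 h2].
    by split.
  exists (size B), (fun j => `|B`_j|), (fun j => B`_j / `|B`_j|), U; split; last split.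
  - move=> j; have [jL jg] := inB j; have nz := nzL _ jL.
    split; first by rewrite normr_gt0.
    split; first by rewrite gt_eqF.
    by rewrite normf_div normr_id divff // normr_eq0.
  - by move=> u; rewrite mem_filter => /andP [/eqP].
  rewrite -/chi chiE [pX U * _]mulrC mulrA; congr (_ * _).
  rewrite /pX big_map -big_split /= (big_nth 0) big_mkord.
  apply: eq_bigr => j _; have [jL jg] := inB j; have nz := nzL _ jL.
  have na : `|B`_j| != 0 by rewrite normr_eq0.
  congr (('X - _%:P) * ('X - _%:P)).
    by rewrite mulrC divfK.
  rewrite /sgc invC_norm norm_conjC conjCK; field.
  by rewrite na.
have regdec : regular A \/ ~ regular A.
  have [_ [r1 r2] _ _] := facts L0 eL0.
  case: (boolP (uniq L0)) => u; first by left; exact: r2.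
  by right => /r1; rewrite (negbTE u).
have sgn2 : forall m : nat, (-1) ^+ (2 * m)%N = 1 :> C.
  by move=> m; rewrite -signr_odd oddM /= expr0.
have regof : resultant chi chi^`() != 0 -> regular A.
  move=> h; case: regdec => // nr; exfalso; move: h; rewrite (res0 nr) eqxx; done.
split.
- split.
    by move=> [m /signk]; rewrite sgn2 mul1r.
  move=> hpos; have reg : regular A by apply: regof; rewrite gt_eqF.
  have [k lox] := exk reg; have := signk k (conj reg lox).
  case: (boolP (odd k)) => ok.
    rewrite -signr_odd ok expr1 mulN1r oppr_gt0 => h.
    by have := lt_trans hpos h; rewrite ltxx.
  move=> _; exists k./2.
  have ek : (2 * k./2)%N = k by rewrite mul2n -{2}(odd_double_half k) (negbTE ok).
  by rewrite ek; exact: (conj reg lox).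
- split.
    by move=> [m /signk]; rewrite exprS sgn2 mulr1 mulN1r oppr_gt0.
  move=> hneg; have reg : regular A by apply: regof; rewrite lt_eqF.
  have [k lox] := exk reg; have := signk k (conj reg lox).
  case: (boolP (odd k)) => ok; last first.
    rewrite -signr_odd (negbTE ok) expr0 mul1r => h.
    by have := lt_trans hneg h; rewrite ltxx.
  move=> _; exists k./2.
  have ek : (2 * k./2).+1 = k by rewrite mul2n -{2}(odd_double_half k) ok.
  by rewrite ek; exact: (conj reg lox).
- split; first exact: res0.
  by move=> h reg; move: (resnz reg); rewrite h eqxx.
Qed.
End Main2.
End Aux.

Theorem theorem1p5 (R : realType) (n : nat) (A : 'M[R[i]]_n) :
  (0 < n)%N -> in_SL A -> c_reciprocal (char_poly A) ->
  [/\ (exists m : nat, regular_k_loxodromic A (2 * m)%N)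
        <-> 0 < resultant (char_poly A) (char_poly A)^`(),
      (exists m : nat, regular_k_loxodromic A (2 * m).+1)
        <-> resultant (char_poly A) (char_poly A)^`() < 0
    & ~ regular A <-> resultant (char_poly A) (char_poly A)^`() = 0].
Proof. exact: Aux.main_gen. Qed.
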